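(* Let $\Lambda$ be an integral lattice in an $n$-dimensional Euclidean space whose minimum $m$ is even. Let $x_0\in\Lambda$ with $N(x_0)=2m-2$, and let $\mathcal E=\{\pm y_1,\dots,\pm y_k\}$ be the set of all vectors $y\in\Lambda$ with $N(y)=2m+2$ and $y-x_0\in 2\Lambda$. Then the lines $\mathbb R y_1,\dots,\mathbb R y_k$ form an equiangular family of lines with common angle $\arccos\frac{1}{m+1}$ (equivalently $|y_i\cdot y_j|=2$ for all $i\neq j$), and the linear span of $\mathcal E$ has dimension at most $n-1$. (Families consisting of fewer than three lines are allowed.)
   Context: $N(x)=x\cdot x$ is the norm of $x$. A lattice $\Lambda$ is integral if $x\cdot y\in\mathbb Z$ for all $x,y\in\Lambda$. The minimum of $\Lambda$ is the smallest norm of a nonzero vector of $\Lambda$. A family of lines is equiangular with common angle $\theta$ if any two distinct lines in it make the angle $\theta$. *)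

(* Defs.v *)
From HB Require Import structures.
From mathcomp Require Import all_boot all_order all_algebra.
Set Implicit Arguments. Unset Strict Implicit. Unset Printing Implicit Defensive.
Import Order.TTheory GRing.Theory Num.Theory.
Local Open Scope ring_scope.

Definition dot (R : rcfType) (n : nat) (u v : 'rV[R]_n) : R := (u *m v^T) 0 0.
Definition normv (R : rcfType) (n : nat) (u : 'rV[R]_n) : R := dot u u.

(* The (full-rank) lattice with basis matrix B (rows = basis vectors). *)
Definition in_lattice (R : rcfType) (n : nat) (B : 'M[R]_n) (v : 'rV[R]_n) : Prop :=
  exists z : 'rV[int]_n, v = map_mx (fun k : int => k%:~R) z *m B.

Definition is_lattice_basis (R : rcfType) (n : nat) (B : 'M[R]_n) : Prop :=
  B \in unitmx.

Definition integral_lattice (R : rcfType) (n : nat) (B : 'M[R]_n) : Prop :=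
  forall x y, in_lattice B x -> in_lattice B y -> exists k : int, dot x y = k%:~R.

Definition lattice_minimum (R : rcfType) (n : nat) (B : 'M[R]_n) (m : R) : Prop :=
  (exists x, in_lattice B x /\ x != 0 /\ normv x = m) /\
  (forall x, in_lattice B x -> x != 0 -> m <= normv x).

Definition line_angle_cos (R : rcfType) (n : nat) (u v : 'rV[R]_n) : R :=
  `|dot u v| / (Num.sqrt (normv u) * Num.sqrt (normv v)).

(* Main.v *)
Require Import Defs.
From HB Require Import structures.
From mathcomp Require Import all_boot all_order all_algebra.
From mathcomp Require Import ring lra zify.
Import Order.TTheory GRing.Theory Num.Theory.
Local Open Scope ring_scope.

Set Implicit Arguments. Unset Strict Implicit.
Section DotLemmas.
Variables (R : rcfType) (n : nat).
Implicit Types (u v w : 'rV[R]_n).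

Lemma dotE u v : dot u v = \sum_i u 0 i * v 0 i.
Proof. by rewrite /dot !mxE; apply: eq_bigr => i _; rewrite mxE. Qed.

Lemma dotC u v : dot u v = dot v u.
Proof. by rewrite !dotE; apply: eq_bigr => i _; rewrite mulrC. Qed.

Lemma dotDl u v w : dot (u + v) w = dot u w + dot v w.
Proof. by rewrite !dotE -big_split; apply: eq_bigr => i _; rewrite mxE mulrDl. Qed.

Lemma dotDr u v w : dot w (u + v) = dot w u + dot w v.
Proof. by rewrite !(dotC w) dotDl. Qed.

Lemma dotZl (a : R) u v : dot (a *: u) v = a * dot u v.
Proof. by rewrite !dotE mulr_sumr; apply: eq_bigr => i _; rewrite mxE mulrA. Qed.

Lemma dotZr (a : R) u v : dot v (a *: u) = a * dot v u.
Proof. by rewrite !(dotC v) dotZl. Qed.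

Lemma dotNl u v : dot (- u) v = - dot u v.
Proof. by rewrite -scaleN1r dotZl mulN1r. Qed.

Lemma dotNr u v : dot v (- u) = - dot v u.
Proof. by rewrite !(dotC v) dotNl. Qed.

Lemma dot0r u : dot u 0 = 0.
Proof. by rewrite dotE big1 // => i _; rewrite mxE mulr0. Qed.

Lemma dim_full_rV : \dim (fullv : {vspace 'rV[R]_n}) = n.
Proof. rewrite dimvf dim_matrix; exact: mul1n. Qed.

Variable B : 'M[R]_n.

Lemma lat_add u v : in_lattice B u -> in_lattice B v -> in_lattice B (u + v).
Proof.
move=> [z1 ->] [z2 ->]; exists (z1 + z2); rewrite -mulmxDl; congr (_ *m _).
by apply/matrixP => i j; rewrite !mxE rmorphD.
Qed.

Lemma lat_opp u : in_lattice B u -> in_lattice B (- u).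
Proof.
move=> [z ->]; exists (- z); rewrite -mulNmx; congr (_ *m _).
by apply/matrixP => i j; rewrite !mxE rmorphN.
Qed.

End DotLemmas.

Theorem theorem1p3 (R : rcfType) (n : nat) (B : 'M[R]_n) (m : nat)
    (hB : is_lattice_basis B) (hint : integral_lattice B)
    (hmin : lattice_minimum B m%:R) (heven : ~~ odd m)
    (x0 : 'rV[R]_n) (hx0 : in_lattice B x0) (hNx0 : normv x0 = (2 * m)%:R - 2) :
  let E := fun y : 'rV[R]_n =>
    [/\ in_lattice B y, normv y = (2 * m + 2)%:R &
        exists w, in_lattice B w /\ y - x0 = 2 *: w] in
  (forall y y', E y -> E y' -> y' != y -> y' != - y ->
     line_angle_cos y y' = 1 / (m + 1)%:R /\ `|dot y y'| = 2) /\
  (exists U : {vspace 'rV[R]_n}, (\dim U <= n.-1)%N /\ forall y, E y -> y \in U).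
Proof.
move=> E.
have hm := hmin.2.
have hN0 : dot x0 x0 = 2 * m%:R - 2 by rewrite -[dot _ _]/(normv x0) hNx0 natrM.
have nz0 : forall u v : 'rV[R]_n, dot u v != 0 -> v != 0.
  by move=> u v; apply: contraNneq => ->; rewrite dot0r.
have key : forall y, E y -> exists w, [/\ in_lattice B w, y = x0 + 2 *: w,
      dot w w = m%:R & dot x0 w = 1 - m%:R].
  move=> y [hy hNy [w [hw hyw]]].
  have ey : y = x0 + 2 *: w by rewrite -hyw addrC subrK.
  have hNy' : dot y y = 2 * m%:R + 2 by rewrite -[dot _ _]/(normv y) hNy natrD natrM.
  move: hNy'; rewrite ey !(dotDl, dotDr, dotZl, dotZr) (dotC w x0) hN0 => e1.
  have e2 : dot x0 w + dot w w = 1 by lra.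
  have hwnz : w != 0.
    apply: (nz0 (x0 + w)); rewrite dotDl e2; exact: oner_neq0.
  have h1 := hm _ hw hwnz.
  have hxw : x0 + w != 0.
    apply: (nz0 w); rewrite dotDr (dotC w x0) e2; exact: oner_neq0.
  have h2 := hm _ (lat_add hx0 hw) hxw.
  move: h2; rewrite /normv !(dotDl, dotDr) (dotC w x0) hN0 => h2.
  rewrite /normv in h1; exists w; split => //; lra.
split.
  move=> y y' hy hy' hne1 hne2.
  have [w [hw ey hww hxw]] := key _ hy.
  have [w' [hw' ey' hww' hxw']] := key _ hy'.
  have [k hk] := hint _ _ hw hw'.
  have ha : w - w' != 0.
    apply: contra_neq hne1 => /eqP; rewrite subr_eq0 => /eqP ew.
    by rewrite ey ey' ew.
  have hb : x0 + w + w' != 0.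
    apply: contra_neq hne2 => /eqP; rewrite addr_eq0 => /eqP ew.
    have ew' : w' = - (x0 + w) by rewrite ew opprK.
    rewrite ey ey' ew' scalerN scalerDr -[2 : R]/(1 + 1) !scalerDl !scale1r !opprD !addrA addrN add0r.
    done.
  have h1 := hm _ (lat_add hw (lat_opp hw')) ha.
  have h2 := hm _ (lat_add (lat_add hx0 hw) hw') hb.
  move: h1 h2; rewrite /normv !(dotDl, dotDr, dotNl, dotNr) (dotC w x0) (dotC w' x0)
    (dotC w' w) hk hN0 hww hww' hxw hxw' => h1 h2.
  have hyy : dot y y' = 2 * m%:R - 2 + 4 * (1 - m%:R) + 4 * k%:~R.
    rewrite ey ey' !(dotDl, dotDr, dotZl, dotZr) (dotC w x0) hk hN0 hxw hxw'; lra.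
  have hl : (m%:Z - 2 <= 2 * k)%R.
    rewrite -(ler_int R) rmorphB rmorphM /=; rewrite -[(m%:Z)%:~R]/(m%:R); lra.
  have hu : (2 * k <= m%:Z)%R.
    rewrite -(ler_int R) rmorphM /=; rewrite -[(m%:Z)%:~R]/(m%:R); lra.
  have hmh : m = (m./2 * 2)%N by rewrite -[in LHS](odd_double_half m) (negbTE heven) add0n -muln2.
  have hmJ : m%:R = (m./2)%:R * 2 :> R by rewrite {1}hmh natrM.
  have hd : dot y y' = 2 \/ dot y y' = - 2.
    have [ek|ek] : k = (m./2)%:Z - 1 \/ k = (m./2)%:Z by lia.
    - right; rewrite hyy ek rmorphB /= -[((m./2)%:Z)%:~R]/((m./2)%:R) hmJ (_ : 1%:~R = 1 :> R) //; lra.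
    - left; rewrite hyy ek -[((m./2)%:Z)%:~R]/((m./2)%:R) hmJ; lra.
  have habs : `|dot y y'| = 2.
    by case: hd => ->; rewrite ?normrN normr_nat.
  split => //.
  rewrite /line_angle_cos habs.
  have [_ -> _] := hy; have [_ -> _] := hy'.
  rewrite -expr2 sqr_sqrtr ?ler0n //.
  have hm1 : (m + 1)%:R != 0 :> R by rewrite pnatr_eq0 addn1.
  rewrite (_ : (2 * m + 2)%:R = 2 * (m + 1)%:R :> R); last by rewrite -natrM mulnDr muln1.
  by field; rewrite natrD in hm1.
pose f : 'Hom('rV[R]_n, 'M[R]_1) := linfun (mulmxr x0^T).
exists (lker f); split.
  have hd := limg_ker_dim f fullv.
  rewrite capfv dim_full_rV in hd.
  have : (0 < \dim (f @: fullv))%N.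
    rewrite lt0n dimv_eq0; apply/negP => /eqP h0.
    have : f x0 \in (f @: fullv)%VS by apply: memv_img; rewrite memvf.
    rewrite h0 memv0 lfunE /= => /eqP/matrixP/(_ 0 0).
    move=> h; move: hN0; rewrite /dot h mxE.
    have : m != 1%N by apply: contraNneq heven => ->.
    by move=> hm1 e; move/eqP: hm1; apply; apply/eqP; rewrite -(eqr_nat R); apply/eqP; lra.
  move=> hpos; apply: (@leq_trans ((\dim (lker f) + \dim (f @: fullv)).-1)); last by rewrite hd.
  by move: hpos; case: (\dim (f @: fullv)) => // b _; rewrite addnS /= leq_addr.
move=> y hy; rewrite memv_ker lfunE /=.
have [w [_ ey _ hxw]] := key _ hy.
have hyx : dot y x0 = 0.
  rewrite ey dotDl dotZl (dotC w x0) hxw hN0; lra.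
by apply/eqP/matrixP => i j; rewrite !ord1 -[(y *m x0^T) 0 0]/(dot y x0) hyx mxE.
Qed.
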